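(* Let $\Gamma$ be a finite group, $S\subseteq\Gamma$, $g\ge 2$, and $\Sigma$ an $|S|$-list of $\Gamma$. If there is an $RSM_\Gamma(S,g;\Sigma)$, then there is an $RSM_\Gamma(S,g+i;\Sigma)$ in each of the following cases: (1) $S=-S$ and $i\ge 2$ is even; (2) $S=\Gamma$, $\Gamma$ has a complete mapping, and $i\ge 1$.
   Context: Let $\Gamma$ be a group (written additively, not necessarily abelian), $S\subseteq\Gamma$ and $\Sigma$ an $|S|$-list (multiset of $|S|$ elements) of $\Gamma$. A row-sum matrix $RSM_\Gamma(S,g;\Sigma)$ is an $|S|\times g$ matrix ($g\ge2$) with entries in $\Gamma$ such that each column is a permutation (arrangement) of $S$ and the multiset of left-to-right row sums $r_1+\cdots+r_g$ equals $\Sigma$. $-S=\{-s: s\in S\}$. A complete mapping of $\Gamma$ is a permutation $\pi$ of $\Gamma$ such that $x\mapsto x+\pi(x)$ is also a permutation of $\Gamma$. *)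

(* Defs.v *)
(* the finite group Gamma is a finGroupType (written
   multiplicatively: the paper's additive + is the group law *, -x is x^-1). *)
From mathcomp Require Import all_boot fingroup perm matrix.
Set Implicit Arguments. Unset Strict Implicit. Unset Printing Implicit Defensive.

Local Open Scope group_scope.

Definition row_sum (gT : finGroupType) (k g : nat) (A : 'M[gT]_(k, g)) (i : 'I_k) : gT :=
  \prod_(j < g) A i j.

Definition is_RSM (gT : finGroupType) (S : {set gT}) (g : nat) (Sigma : seq gT)
    (A : 'M[gT]_(#|S|, g)) : Prop :=
  [/\ 2 <= g,
      (forall j : 'I_g, injective (fun i : 'I_#|S| => A i j) /\
                         (forall i : 'I_#|S|, A i j \in S)) &
      perm_eq [seq row_sum A i | i <- enum 'I_#|S|] Sigma].

Arguments is_RSM {gT} S g Sigma A.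

Definition has_RSM (gT : finGroupType) (S : {set gT}) (g : nat) (Sigma : seq gT) : Prop :=
  exists A : 'M[gT]_(#|S|, g), is_RSM S g Sigma A.

Definition complete_mapping (gT : finGroupType) (pi : {perm gT}) : Prop :=
  injective (fun x : gT => x * pi x).

Definition has_complete_mapping (gT : finGroupType) : Prop :=
  exists pi : {perm gT}, complete_mapping pi.

(* Main.v *)
Require Import Defs.
From mathcomp Require Import all_boot fingroup perm matrix.
Set Implicit Arguments. Unset Strict Implicit. Unset Printing Implicit Defensive.
Local Open Scope group_scope.

Lemma rowsum_row_mx (gT : finGroupType) k m n (A : 'M[gT]_(k, m)) (C : 'M[gT]_(k, n)) i :
  row_sum (row_mx A C) i = row_sum A i * row_sum C i.
Proof.
rewrite /row_sum big_split_ord /=.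
by congr (_ * _); apply: eq_bigr => j _; rewrite ?row_mxEl ?row_mxEr.
Qed.

Lemma cols_row_mx (gT : finGroupType) (S : {set gT}) m n
  (A : 'M[gT]_(#|S|, m)) (C : 'M[gT]_(#|S|, n)) :
  (forall j : 'I_m, injective (fun i : 'I_#|S| => A i j) /\
                         (forall i : 'I_#|S|, A i j \in S)) ->
  (forall j : 'I_n, injective (fun i : 'I_#|S| => C i j) /\
                         (forall i : 'I_#|S|, C i j \in S)) ->
  (forall j : 'I_(m + n), injective (fun i : 'I_#|S| => row_mx A C i j) /\
                         (forall i : 'I_#|S|, row_mx A C i j \in S)).
Proof.
move=> HA HC j; rewrite -(splitK j); case: (split j) => j' /=.
  by case: (HA j') => H1 H2; split => [i1 i2|i]; rewrite ?row_mxEl //; apply: H1.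
by case: (HC j') => H1 H2; split => [i1 i2|i]; rewrite ?row_mxEr //; apply: H1.
Qed.

Lemma append_RSM (gT : finGroupType) (S : {set gT}) g n (Sigma : seq gT)
  (A : 'M[gT]_(#|S|, g)) (C : 'M[gT]_(#|S|, n)) :
  is_RSM S g Sigma A ->
  (forall j : 'I_n, injective (fun i : 'I_#|S| => C i j) /\
                         (forall i : 'I_#|S|, C i j \in S)) ->
  (forall i, row_sum C i = 1) ->
  has_RSM S (g + n) Sigma.
Proof.
move=> [g2 HA Hp] HC H1; exists (row_mx A C); split.
- exact: leq_trans g2 (leq_addr _ _).
- exact: cols_row_mx.
- by under eq_map => i do rewrite rowsum_row_mx H1 mulg1.
Qed.

Lemma step2 (gT : finGroupType) (S : {set gT}) g (Sigma : seq gT) :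
  [set (x^-1)%g | x in S] = S -> has_RSM S g Sigma -> has_RSM S (g + 2) Sigma.
Proof.
move=> HS [A HA]; have [g2 Hc _] := HA.
case: g g2 A HA Hc => [|[|n]] // _ A HA Hc.
pose C : 'M[gT]_(#|S|, 2) := (\matrix_(i, j) (if (j : nat) == 0 then A i ord0 else (A i ord0)^-1)%g)%R.
apply: (append_RSM (C := C) HA).
- move=> j; have [Hi Hm] := Hc ord0.
  case: j => [[|[|j]] Hj] //=.
    by split => [i1 i2|i]; rewrite !mxE /=; [apply: Hi|apply: Hm].
  split => [i1 i2|i]; rewrite !mxE /=.
    by move/invg_inj; apply: Hi.
  have: (A i ord0)^-1 \in [set (x^-1)%g | x in S] by apply: imset_f.
  by rewrite HS.
- move=> i; rewrite /row_sum !big_ord_recl big_ord0 !mxE /=.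
  by rewrite mulg1 mulgV.
Qed.

Lemma step1 (gT : finGroupType) g (Sigma : seq gT) :
  has_complete_mapping gT -> has_RSM [set: gT] g Sigma -> has_RSM [set: gT] (g + 1) Sigma.
Proof.
move=> [pi Hpi] [A HA]; have [g2 Hc Hp] := HA.
rewrite addnC.
case: g g2 A HA Hc Hp => [|[|n]] // _ A HA Hc Hp.
pose tp := perm Hpi.
pose y i := tp^-1 (A i ord0).
have Hyz i : y i * pi (y i) = A i ord0.
  by have := permE Hpi (y i); rewrite /= => <-; rewrite permKV.
pose Y : 'M[gT]_(#|[set: gT]|, 1) := (\matrix_(i, j) y i)%R.
pose A' : 'M[gT]_(#|[set: gT]|, n.+2) :=
  (\matrix_(i, j) (if (j : nat) == 0 then pi (y i) else A i j)%g)%R.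
exists (row_mx Y A'); split => //.
- have [Hi _] := Hc ord0.
  apply: cols_row_mx.
    move=> j; split => [i1 i2|i]; rewrite ?in_setT // !mxE.
    by move/perm_inj/Hi.
  move=> j; split => [i1 i2|i]; rewrite ?in_setT // !mxE.
  case: eqP => _; last by have [] := Hc j; auto.
  by move/perm_inj/perm_inj/Hi.
- suff ->: [seq row_sum (row_mx Y A') i | i <- enum 'I_#|[set: gT]|] =
           [seq row_sum A i | i <- enum 'I_#|[set: gT]|] by [].
  apply: eq_map => i.
  rewrite rowsum_row_mx /row_sum (big_ord_recl 0) big_ord0 mulg1.
  rewrite (big_ord_recl n.+1 (fun j => A' i j)) (big_ord_recl n.+1 (fun j => A i j)).
  rewrite !mxE /= mulgA Hyz; congr (_ * _).
  by apply: eq_bigr => j _; rewrite mxE.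
Qed.

Theorem mainTheorem5 (gT : finGroupType) (S : {set gT}) (g : nat) (Sigma : seq gT) :
  2 <= g -> size Sigma = #|S| -> has_RSM S g Sigma ->
  ([set (x^-1)%g | x in S] = S ->
     forall i : nat, 2 <= i -> ~~ odd i -> has_RSM S (g + i) Sigma) /\
  (S = [set: gT] -> has_complete_mapping gT ->
     forall i : nat, 1 <= i -> has_RSM S (g + i) Sigma).
Proof.
move=> g2 _ H; split.
  move=> HS i _ /negPf Hodd.
  have -> : i = i./2.*2 by rewrite -{1}(odd_double_half i) Hodd.
  elim: i./2 => [|m IH]; first by rewrite addn0.
  by rewrite doubleS -addn2 addnA; apply: step2.
move=> HS Hcm i _; subst S.
elim: i => [|m IH]; first by rewrite addn0.
by rewrite -addn1 addnA; apply: step1.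
Qed.
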